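(* Let $X$ be a scalable monoid over a ring $R$, $S$ a coherent system of unit elements for $X$, and $T\subseteq S$ a normal submonoid of $X$. Then $X/T$ is a scalable monoid, $[t]_T=[1_X]_T$ for every $t\in T$, and $S/T=\{[s]_T\mid s\in S\}$ is a coherent system of unit elements for $X/T$.
   Context: A scalable monoid over a (unital, associative) ring $R$ is a monoid $X$ (identity $1_X$, product written $xy$) together with a map $R\times X\to X$, $(\alpha,x)\mapsto\alpha\cdot x$, such that $1\cdot x=x$, $\alpha\cdot(\beta\cdot x)=\alpha\beta\cdot x$ and $\alpha\cdot(xy)=(\alpha\cdot x)y=x(\alpha\cdot y)$. In a scalable monoid $Y$, $x\sim y$ iff $\alpha\cdot x=\beta\cdot y$ for some $\alpha,\beta\in R$. A unit element is some $u\in Y$ such that every $x\sim u$ equals $\lambda\cdot u$ for some $\lambda\in R$, and $\lambda\cdot u=\lambda'\cdot u$ implies $\lambda=\lambda'$. A set $U\subseteq Y$ is dense if for every $x\in Y$ there is $u\in U$ with $u\sim x$, and sparse if $u\sim v$ implies $u=v$ for $u,v\in U$; a coherent system of unit elements for $Y$ is a submonoid of $Y$ that is a dense and sparse set of unit elements. A submonoid $T$ of $X$ is normal if $xT=Tx$ for all $x\in X$. For such $T$, $x\sim_T y$ iff $mx=ny$ for some $m,n\in T$; this is a congruence, $[x]_T$ denotes the class of $x$, and $X/T$ is the set of classes with $[x]_T[y]_T=[xy]_T$, $\lambda\cdot[x]_T=[\lambda\cdot x]_T$, identity $[1_X]_T$. *)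

(* Defs.v *)
From mathcomp Require Import all_boot all_algebra.
Set Implicit Arguments. Unset Strict Implicit. Unset Printing Implicit Defensive.
Import GRing.Theory.
Local Open Scope ring_scope.

Section ScalableMonoids.
Variable R : pzRingType.
Variable X : Type.
Variable mul : X -> X -> X.
Variable one : X.
Variable scale : R -> X -> X.

Definition is_scalable_monoid : Prop :=
  (forall x y z, mul x (mul y z) = mul (mul x y) z) /\
  (forall x, mul one x = x) /\
  (forall x, mul x one = x) /\
  (forall x, scale 1 x = x) /\
  (forall (a b : R) x, scale a (scale b x) = scale (a * b) x) /\
  (forall (a : R) x y, scale a (mul x y) = mul (scale a x) y) /\
  (forall (a : R) x y, scale a (mul x y) = mul x (scale a y)).

Definition ssim (x y : X) : Prop := exists a b : R, scale a x = scale b y.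

Definition unit_element (u : X) : Prop :=
  (forall x, ssim x u -> exists l : R, x = scale l u) /\
  (forall l l' : R, scale l u = scale l' u -> l = l').

Definition dense (U : X -> Prop) : Prop :=
  forall x, exists u, U u /\ ssim u x.

Definition sparse (U : X -> Prop) : Prop :=
  forall u v, U u -> U v -> ssim u v -> u = v.

Definition submonoid (U : X -> Prop) : Prop :=
  U one /\ (forall x y, U x -> U y -> U (mul x y)).

Definition coherent_system (U : X -> Prop) : Prop :=
  submonoid U /\ dense U /\ sparse U /\ (forall u, U u -> unit_element u).

End ScalableMonoids.

Section Quotient.
Variable X : Type.
Variable mul : X -> X -> X.
Variable one : X.

Definition normal_submonoid (T : X -> Prop) : Prop :=
  submonoid mul one T /\
  (forall x t, T t -> exists t', T t' /\ mul x t = mul t' x) /\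
  (forall x t, T t -> exists t', T t' /\ mul t x = mul x t').

Definition simT (T : X -> Prop) (x y : X) : Prop :=
  exists m n, T m /\ T n /\ mul m x = mul n y.

Definition cls (T : X -> Prop) (x : X) : X -> Prop := fun y => simT T x y.

Definition quot (T : X -> Prop) : Type :=
  { A : X -> Prop | exists x, A = cls T x }.

Definition qcls (T : X -> Prop) (x : X) : quot T :=
  exist _ (cls T x) (ex_intro _ x erefl).

Definition quot_set (T S : X -> Prop) : quot T -> Prop :=
  fun q => exists s, S s /\ q = qcls T s.


End Quotient.
Arguments quot_set [X] mul T S _.

(* Main.v *)
Require Import Defs.
From mathcomp Require Import all_boot all_algebra.
From Stdlib Require Import ProofIrrelevance PropExtensionality FunctionalExtensionality ClassicalEpsilon.
Local Open Scope ring_scope.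
Set Implicit Arguments.

Lemma simT_refl X (mul : X->X->X) (T : X -> Prop) (one:X) :
  T one -> forall x, simT mul T x x.
Proof. by move=> h1 x; exists one, one. Qed.

Lemma simT_sym X (mul : X->X->X) (T : X -> Prop) x y :
  simT mul T x y -> simT mul T y x.
Proof. case=> [m [n [hm [hn e]]]]; by exists n, m. Qed.

Lemma simT_trans X (mul : X -> X -> X) (T : X -> Prop) :
  (forall x y z, mul x (mul y z) = mul (mul x y) z) ->
  (forall x y, T x -> T y -> T (mul x y)) ->
  (forall x t, T t -> exists t', T t' /\ mul x t = mul t' x) ->
  forall x y z, simT mul T x y -> simT mul T y z -> simT mul T x z.
Proof.
move=> A M N x y z [m [n [hm [hn e1]]]] [m' [n' [hm' [hn' e2]]]].
have [t' [ht' e3]] := N n m' hm'.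
exists (mul t' m), (mul n n'); split; first by apply M.
split; first by apply M.
by rewrite -!A e1 A -e3 -A e2.
Qed.

Lemma simT_mull X (mul : X -> X -> X) (T : X -> Prop) :
  (forall x y z, mul x (mul y z) = mul (mul x y) z) ->
  forall x x' y, simT mul T x x' -> simT mul T (mul x y) (mul x' y).
Proof.
move=> A x x' y [m [n [hm [hn e]]]]; exists m, n; do 2 split => //.
by rewrite !A e.
Qed.

Lemma simT_mulr X (mul : X -> X -> X) (T : X -> Prop) :
  (forall x y z, mul x (mul y z) = mul (mul x y) z) ->
  (forall x t, T t -> exists t', T t' /\ mul x t = mul t' x) ->
  forall x y y', simT mul T y y' -> simT mul T (mul x y) (mul x y').
Proof.
move=> A N x y y' [m [n [hm [hn e]]]].
have [m1 [hm1 e1]] := N x m hm.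
have [n1 [hn1 e2]] := N x n hn.
exists m1, n1; do 2 split => //.
by rewrite !A -e1 -e2 -!A e.
Qed.

Lemma simT_scale (R : pzRingType) X (mul : X -> X -> X) (scale : R -> X -> X) (T : X -> Prop) :
  (forall (a : R) x y, scale a (mul x y) = mul x (scale a y)) ->
  forall a x x', simT mul T x x' -> simT mul T (scale a x) (scale a x').
Proof.
move=> H a x x' [m [n [hm [hn e]]]]; exists m, n; do 2 split => //.
by rewrite -!H e.
Qed.

Lemma qcls_inv X (mul : X -> X -> X) (one : X) (T : X -> Prop) :
  T one -> forall x y, qcls mul T x = qcls mul T y -> simT mul T x y.
Proof.
move=> h1 x y e.
have e' : cls mul T x = cls mul T y by move: e => /(f_equal (@proj1_sig _ _)).
have : cls mul T y y by apply: simT_refl h1 y.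
by rewrite -e'.
Qed.

Lemma qcls_eq X (mul : X -> X -> X) (T : X -> Prop) :
  (forall x y z, mul x (mul y z) = mul (mul x y) z) ->
  (forall x y, T x -> T y -> T (mul x y)) ->
  (forall x t, T t -> exists t', T t' /\ mul x t = mul t' x) ->
  forall x y, simT mul T x y -> qcls mul T x = qcls mul T y.
Proof.
move=> A M N x y h; apply: subset_eq_compat.
apply: functional_extensionality => z; apply: propositional_extensionality.
rewrite /cls /=; split => hz.
- exact: (simT_trans A M N (simT_sym h) hz).
- exact: (simT_trans A M N h hz).
Qed.

Lemma qrep_ex X (mul : X -> X -> X) (T : X -> Prop) (q : quot mul T) :
  exists x, q = qcls mul T x.
Proof.
case: q => A p; case: (p) => x ex; exists x; subst A.
by apply: subset_eq_compat.
Qed.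

Unset Implicit Arguments.

Theorem propositionA1 (R : pzRingType) (X : Type) (mul : X -> X -> X) (one : X)
  (scale : R -> X -> X) (S T : X -> Prop) :
  is_scalable_monoid mul one scale ->
  coherent_system mul one scale S ->
  (forall t, T t -> S t) ->
  normal_submonoid mul one T ->
  exists (qmul : quot mul T -> quot mul T -> quot mul T)
         (qscale : R -> quot mul T -> quot mul T),
    (forall x y, qmul (qcls mul T x) (qcls mul T y) = qcls mul T (mul x y)) /\
    (forall (a : R) x, qscale a (qcls mul T x) = qcls mul T (scale a x)) /\
    is_scalable_monoid qmul (qcls mul T one) qscale /\
    (forall t, T t -> qcls mul T t = qcls mul T one) /\
    coherent_system qmul (qcls mul T one) qscale (quot_set mul T S).
Proof.
move=> [A [m1 [m1r [s1 [sA [sl sr]]]]]] [[S1 SM] [Sd [Ssp Su]]] TS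
  [[T1 TM] [N1 N2]].
pose rep (q : quot mul T) : X := proj1_sig (constructive_indefinite_description _ (qrep_ex q)).
have repP : forall q, q = qcls mul T (rep q).
  by move=> q; rewrite /rep; case: constructive_indefinite_description.
have repC : forall x, simT mul T x (rep (qcls mul T x)).
  by move=> x; apply: qcls_inv T1 _ _ _; rewrite -repP.
have Qeq := qcls_eq A TM N1.
have Qinv := @qcls_inv X mul one T T1.
have Str := simT_trans A TM N1.
have Qind : forall P : quot mul T -> Prop, (forall x, P (qcls mul T x)) -> forall q, P q.
  by move=> P h q; rewrite (repP q).
pose qm (p q : quot mul T) := qcls mul T (mul (rep p) (rep q)).
pose qs (a : R) (q : quot mul T) := qcls mul T (scale a (rep q)).
have qmulE : forall x y, qm (qcls mul T x) (qcls mul T y) = qcls mul T (mul x y).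
  move=> x y; apply: Qeq; apply: simT_sym.
  apply: Str (simT_mull A _ (repC x)) _.
  exact: simT_mulr A N1 _ _ _ (repC y).
have qscaleE : forall a x, qs a (qcls mul T x) = qcls mul T (scale a x).
  move=> a x; apply: Qeq; apply: simT_sym; exact: simT_scale sr _ _ _ (repC x).
clearbody qm qs.
exists qm, qs.
split; first exact: qmulE.
split; first exact: qscaleE.
split.
  split.
    move=> p q r; elim/Qind: p; elim/Qind: q; elim/Qind: r => z y x.
    by rewrite !qmulE A.
  split; first by elim/Qind => x; rewrite qmulE m1.
  split; first by elim/Qind => x; rewrite qmulE m1r.
  split; first by elim/Qind => x; rewrite qscaleE s1.
  split; first by move=> a b; elim/Qind => x; rewrite !qscaleE sA.
  split; first by move=> a; elim/Qind => x; elim/Qind => y; rewrite qmulE !qscaleE qmulE sl.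
  by move=> a; elim/Qind => x; elim/Qind => y; rewrite qmulE !qscaleE qmulE sr.
split.
  move=> t ht; apply: Qeq; exists one, t; do 2 split => //.
  by rewrite m1 m1r.
split.
  split; first by exists one.
  move=> p q [s [hs ->]] [s' [hs' ->]]; exists (mul s s'); split; first exact: SM.
  exact: qmulE.
split.
  elim/Qind => x; have [u [hu [a [b e]]]] := Sd x.
  exists (qcls mul T u); split; first by exists u.
  by exists a, b; rewrite !qscaleE e.
split.
  move=> p q [u [hu ->]] [v [hv ->]] [a [b e]].
  rewrite !qscaleE in e; have [m [n [hm [hn e']]]] := Qinv _ _ e.
  rewrite -sr -(sr b) in e'.
  have e2 : mul m u = mul n v.
    apply: (Ssp _ _ (SM _ _ (TS _ hm) hu) (SM _ _ (TS _ hn) hv)); by exists a, b.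
  by apply: Qeq; exists m, n.
move=> p [s [hs ->]]; split.
  elim/Qind => x [a [b e]]; rewrite !qscaleE in e.
  have [m [n [hm [hn e']]]] := Qinv _ _ e.
  rewrite -sr -(sr b) in e'.
  have hns : S (mul n s) by exact: (SM _ _ (TS _ hn) hs).
  have [l el] := (Su _ hns).1 (mul m x) (ex_intro _ a (ex_intro _ b e')).
  exists l; rewrite qscaleE; apply: Qeq; exists m, n; do 2 split => //.
  by rewrite el sr.
move=> l l'; rewrite !qscaleE => e.
have [m [n [hm [hn e']]]] := Qinv _ _ e.
rewrite -sr -(sr l') in e'.
have hms : S (mul m s) by exact: (SM _ _ (TS _ hm) hs).
have hns : S (mul n s) by exact: (SM _ _ (TS _ hn) hs).
have e2 : mul m s = mul n s by apply: (Ssp _ _ hms hns); exists l, l'.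
rewrite -e2 in e'; exact: (Su _ hms).2 _ _ e'.
Qed.
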